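(* In the setting described in the context, for any $s\in\{1,\dots,T\}$, any $k\in\{1,\dots,K\}$ and any $0<\beta<1$, $$\mathbb{P}\left(\frac{(v^*_{ks})^2}{\sum_{t\neq s}(v^*_{kt})^2}\ge\frac{1}{T^\beta}\right)\le\frac{T^\beta+1}{T}.$$
   Context: Fixed inputs $\mathbf{x}_1,\dots,\mathbf{x}_N\in\mathbb{R}^d$. Networks $f_\theta(\mathbf{x})=\sum_{k=1}^K\mathbf{v}_k(\mathbf{w}_k^\top\mathbf{x}+b_k)_+$ with $\mathbf{w}_k\in\mathbb{S}^{d-1}$, $b_k\in\mathbb{R}$, $\mathbf{v}_k\in\mathbb{R}^T$, $K\ge N^2$. Training problem: $\min_\theta\sum_{i=1}^N\mathcal{L}(\mathbf{y}_i,f_\theta(\mathbf{x}_i))+\lambda\sum_{k=1}^K\|\mathbf{v}_k\|_2$, $\lambda>0$, with loss separable across tasks and lower semicontinuous in its second argument. The task label vectors $\mathbf{y}_{\cdot,t}$, $t=1,\dots,T$, are exchangeable random vectors, and the optimal output weights $\mathbf{v}_k^*=(v^*_{k1},\dots,v^*_{kT})$ are given by a measurable deterministic permutation-invariant selection map of the labels (permuting the $T$ label coordinates permutes the coordinates of all selected $\mathbf{v}_k^*$ identically). The ratio is $[0,\infty]$-valued: $\infty$ iff the denominator is $0$ and the numerator nonzero, and $0$ if both are $0$. *)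

(* Defs.v *)
From HB Require Import structures.
From mathcomp Require Import all_boot all_order all_algebra all_fingroup.
From mathcomp Require Import all_classical all_reals all_analysis.
Set Implicit Arguments. Unset Strict Implicit. Unset Printing Implicit Defensive.
Import Order.TTheory GRing.Theory Num.Theory.
Local Open Scope classical_set_scope.
Local Open Scope ring_scope.

(* Labels: a T-tuple of task label vectors y_{.,t}, each an N-tuple of reals
   (entry i of task t is the label y_{i t}).  The tuple types carry the
   product sigma-algebra (measure_tuple_display) over the Borel sets of R. *)
Definition labels (R : realType) (N T : nat) := T.-tuple (N.-tuple R).

Definition label_entry (R : realType) N T (L : labels R N T) (i : 'I_N) (t : 'I_T) : R :=
  tnth (tnth L t) i.

Definition perm_labels (R : realType) N T (s : 'S_T) (L : labels R N T) : labels R N T :=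
  [tuple tnth L (s i) | i < T].

Definition exchangeable_labels (R : realType) (d : measure_display)
  (Omega : measurableType d) (P : probability Omega R) N T
  (Y : Omega -> labels R N T) : Prop :=
  forall (s : 'S_T) (A : set (labels R N T)), measurable A ->
    P (Y @^-1` A) = P ((perm_labels s \o Y) @^-1` A).

(* Parameters theta = (w_k, b_k, v_k)_{k<K} of a width-K shallow ReLU network
   R^dim -> R^T. *)
Record params (R : realType) (K dim T : nat) := Params {
  pw : 'I_K -> 'I_dim -> R ;
  pb : 'I_K -> R ;
  pv : 'I_K -> 'I_T -> R }.

Definition relu (R : realType) (z : R) : R := Num.max 0 z.

Definition net (R : realType) K dim T (th : params R K dim T) (x : 'I_dim -> R)
  (t : 'I_T) : R :=
  \sum_(k < K) pv th k t * relu (\sum_(j < dim) pw th k j * x j + pb th k).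

Definition feasible (R : realType) K dim T (th : params R K dim T) : Prop :=
  forall k, \sum_(j < dim) pw th k j ^+ 2 = 1.

Definition vnorm (R : realType) K dim T (th : params R K dim T) (k : 'I_K) : R :=
  Num.sqrt (\sum_(t < T) pv th k t ^+ 2).

(* Training objective with a loss separable across tasks:
   L(y, yhat) = sum_t loss t (y_t) (yhat_t). *)
Definition objective (R : realType) N K dim T (x : 'I_N -> 'I_dim -> R)
  (loss : 'I_T -> R -> R -> \bar R) (lam : R) (L : labels R N T)
  (th : params R K dim T) : \bar R :=
  (\sum_(i < N) \sum_(t < T) loss t (label_entry L i t) (net th (x i) t)
   + (lam * \sum_(k < K) vnorm th k)%:E)%E.

Definition is_minimizer (R : realType) N K dim T (x : 'I_N -> 'I_dim -> R)
  (loss : 'I_T -> R -> R -> \bar R) (lam : R) (L : labels R N T)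
  (th : params R K dim T) : Prop :=
  feasible th /\
  forall th' : params R K dim T, feasible th' ->
    (objective x loss lam L th <= objective x loss lam L th')%E.

(* [0,+oo]-valued ratio a / b: +oo iff b = 0 and a <> 0, and 0 if a = b = 0 *)
Definition eratio (R : realType) (a b : R) : \bar R :=
  if b == 0 then (if a == 0 then 0%E else +oo%E) else (a / b)%:E.

(* Main.v *)
Require Import Defs.
From HB Require Import structures.
From mathcomp Require Import all_boot all_order all_algebra all_fingroup.
From mathcomp Require Import all_classical all_reals all_analysis.
From mathcomp Require Import lra measurable_realfun measurable_fun_approximation.
Import Order.TTheory GRing.Theory Num.Theory.
Import numFieldTopology.Exports.
Local Open Scope classical_set_scope.
Local Open Scope ring_scope.

Lemma eratio_ge (R : realType) (a b c : R) : 0 <= a -> 0 <= b -> 0 < c ->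
  ((c%:E <= eratio a b)%E <-> (a != 0 /\ c * b <= a)).
Proof.
move=> a0 b0 c0; rewrite /eratio.
have [->|bn0] := eqVneq b 0.
  have [->|an0] := eqVneq a 0; first by rewrite lee_fin; split => [|[]]; [move=> h; lra|].
  by rewrite leey mulr0; split.
have bp : 0 < b by rewrite lt_def bn0.
rewrite lee_fin ler_pdivlMr //; split.
  move=> h; split => //; apply/eqP => a00; move: h; rewrite a00 => h.
  have : 0 < c * b by apply: mulr_gt0.
  lra.
by case.
Qed.

Lemma count_bound (R : realType) (T : nat) (a : 'I_T -> R) (c : R)
  (c0 : 0 < c) (a0 : forall t, 0 <= a t) (E : 'I_T -> bool)
  (hE : forall t, E t -> a t != 0 /\ c * (\sum_u a u - a t) <= a t) :
  \sum_t (E t)%:R <= 1 + c^-1 :> R.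
Proof.
set S := \sum_u a u; set n := \sum_t (E t)%:R : R.
have S0 : 0 <= S by apply: sumr_ge0.
have h1 : n * (c * S) <= (1 + c) * \sum_t ((E t)%:R * a t).
  rewrite /n mulr_suml mulr_sumr; apply: ler_sum => t _.
  case Et: (E t); last by rewrite !mul0r mulr0.
  have [_ h] := hE t Et; rewrite !mul1r; rewrite mulrBr in h; rewrite mulrDl mul1r; rewrite -/S in h; lra.
have h2 : \sum_t ((E t)%:R * a t) <= S.
  by apply: ler_sum => t _; case: (E t); rewrite ?mul1r ?mul0r.
have n0 : 0 <= n by apply: sumr_ge0 => t _; case: (E t).
have [n00|npos] := eqVneq n 0.
  by rewrite n00; have := invr_gt0 c; rewrite c0 => /= h; lra.
have Spos : 0 < S.
  have [t Et] : exists t, E t.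
    apply/existsP; apply: contraR npos => /existsPn h.
    by apply/eqP; apply: big1 => t _; move: (h t); case: (E t).
  have [an0 _] := hE t Et.
  have at0 : 0 < a t by rewrite lt_def an0 a0.
  rewrite /S (bigD1 t) //=; have : 0 <= \sum_(u | u != t) a u by apply: sumr_ge0 => u _. 
  lra.
have h3 : n * (c * S) <= (1 + c) * S.
  apply: (le_trans h1); apply: ler_wpM2l => //; lra.
have h4 : n * c <= 1 + c by move: h3; rewrite mulrA ler_pM2r.
rewrite -(ler_pM2r c0) mulrDl mulVf ?mul1r; [lra|by rewrite gt_eqF].
Qed.

Theorem lemma4 (R : realType) (N dim K T : nat)
  (x : 'I_N -> 'I_dim -> R) (hK : (N ^ 2 <= K)%N)
  (loss : 'I_T -> R -> R -> \bar R)
  (hloss : forall (t : 'I_T) (y : R), lower_semicontinuous (loss t y))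
  (lam : R) (hlam : 0 < lam)
  (d : measure_display) (Omega : measurableType d) (P : probability Omega R)
  (Y : Omega -> labels R N T) (mY : measurable_fun setT Y)
  (hexch : exchangeable_labels P Y)
  (sel : labels R N T -> params R K dim T)
  (hsel_opt : forall L, is_minimizer x loss lam L (sel L))
  (hsel_meas : forall (k : 'I_K) (t : 'I_T),
      measurable_fun setT (fun L => pv (sel L) k t))
  (hsel_perm : forall (s : 'S_T) (L : labels R N T) (k : 'I_K) (t : 'I_T),
      pv (sel (perm_labels s L)) k t = pv (sel L) k (s t))
  (s : 'I_T) (k : 'I_K) (beta : R) (hb0 : 0 < beta) (hb1 : beta < 1) :
  (P [set w | (eratio (pv (sel (Y w)) k s ^+ 2)
                     (\sum_(t < T | t != s) pv (sel (Y w)) k t ^+ 2)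
              >= ((T%:R `^ beta)^-1)%:E)%E]
  <= ((T%:R `^ beta + 1) / T%:R)%:E)%E.
Proof.
have Tpos : (0 < T)%N by case: s => i /= hi; apply: leq_ltn_trans hi.
have Tb0 : 0 < T%:R `^ beta by apply: powR_gt0; rewrite ltr0n.
set c := (T%:R `^ beta)^-1.
have c0 : 0 < c by rewrite invr_gt0.
pose a L t := pv (sel L) k t ^+ 2.
have a0 L t : 0 <= a L t by apply: sqr_ge0.
pose A t := [set L | a L t != 0 /\ c * (\sum_u a L u - a L t) <= a L t].
have sumD L t : \sum_(u < T | u != t) a L u = \sum_u a L u - a L t.
  by rewrite [X in _ = X - _](bigD1 t) //= addrC addrK.
have Eeq : [set w | (eratio (pv (sel (Y w)) k s ^+ 2)
                     (\sum_(t < T | t != s) pv (sel (Y w)) k t ^+ 2)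
              >= c%:E)%E] = Y @^-1` A s.
  apply/seteqP; split => w /=.
    move/eratio_ge => h; have := h (a0 _ _) (sumr_ge0 _ (fun u _ => a0 (Y w) u)) c0. rewrite -/c -/(a (Y w) s) sumD; by [].
  move=> [h1 h2]; apply: (proj2 (@eratio_ge _ _ _ _ (a0 _ _) (sumr_ge0 _ (fun u _ => a0 (Y w) u)) c0)).
  by split => //; rewrite -/(a (Y w) s) sumD.
rewrite Eeq.
have ma t : measurable_fun setT (fun L => a L t) by apply: measurable_funX.
have mS : measurable_fun setT (fun L => \sum_u a L u).
  by apply: measurable_sum => u; exact: ma.
have mA t : measurable (A t).
  have mg : measurable_fun setT (fun L => a L t - c * (\sum_u a L u - a L t)).
    apply: measurable_funB => //; apply: measurable_funM => //.
    by apply: measurable_funB.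
  have -> : A t = ((fun L => a L t) @^-1` [set~ 0]) `&`
     ((fun L => a L t - c * (\sum_u a L u - a L t)) @^-1` `[0, +oo[).
    apply/seteqP; split => L /=.
      by move=> [/eqP h1 h2]; split => //; rewrite in_itv /= andbT subr_ge0.
    by move=> [/eqP h1]; rewrite in_itv /= andbT subr_ge0.
  apply: measurableI.
    by have := ma t measurableT [set~ 0] (measurableC (measurable_set1 _)); rewrite setTI.
  by have := mg measurableT _ (measurable_itv `[0, +oo[); rewrite setTI.
have mE t : measurable (Y @^-1` A t).
  by have := mY measurableT _ (mA t); rewrite setTI.
have Peq t : P (Y @^-1` A t) = P (Y @^-1` A s).
  rewrite [RHS](hexch (tperm s t) _ (mA s)); congr (P _).
  have aP L u : a (perm_labels (tperm s t) L) u = a L (tperm s t u) by rewrite /a hsel_perm.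
  have sP L : \sum_u a (perm_labels (tperm s t) L) u = \sum_u a L u.
    under eq_bigr do rewrite aP.
    by rewrite [RHS](reindex_inj (@perm_inj _ (tperm s t))).
  by apply/funext => w /=; rewrite /A /= aP sP tpermL.
have mI t : measurable_fun setT (fun w => (\1_(Y @^-1` A t) w)%:E : \bar R).
  by apply/measurable_EFinP; exact: measurable_indic.
have key : (\sum_(t < T) P (Y @^-1` A t) <= (1 + c^-1)%:E)%E.
  have -> : (\sum_(t < T) P (Y @^-1` A t) =
      \sum_(t < T) \int[P]_(w in setT) (\1_(Y @^-1` A t) w)%:E)%E.
    by apply: eq_bigr => t _; rewrite integral_indic // setIT.
  rewrite -ge0_integral_sum //.
  have -> : (1 + c^-1)%:E = (\int[P]_(w in setT) (cst (1 + c^-1)%:E) w)%E.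
    have P1 : P setT = 1%E by exact: probability_setT.
    rewrite integral_cst // -[LHS]mule1; congr (_ * _)%E; by rewrite -P1.
  apply: ge0_le_integral => //.
  - by move=> w _; apply: sume_ge0 => t _; rewrite lee_fin.
  - by apply: emeasurable_sum => t; exact: mI.
  move=> w _; rewrite sumEFin lee_fin /=.
  under eq_bigr do rewrite indicE.
  apply: (@count_bound _ _ _ _ c0 (a0 (Y w))) => t /set_mem [h1 h2]; by split.
have fin : P (Y @^-1` A s) \is a fin_num by rewrite fin_num_measure.
rewrite (eq_bigr _ (fun t _ => Peq t)) -(fineK fin) sumEFin sumr_const card_ord lee_fin in key.
rewrite -(fineK fin) lee_fin ler_pdivlMr ?ltr0n // mulr_natr.
by move: key; rewrite /c invrK addrC.
Qed.
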